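(* Let $G=(V,E)$ be a finite, simple, connected graph with $|V|\geq 3$ and let $d\in\mathrm{Der}(\mathcal{A}(G))$ with $d(e_i)=\sum_{k\in V}d_{ik}e_k$. Then: (i) for every $i\in V$, $d_{ii}=\frac{1}{2\deg(i)}\sum_{k\in\mathcal{N}(i)}d_{kk}$; (ii) if $i\sim_t j$ then $d_{ii}=d_{jj}$.
   Context: Throughout, $\mathbb{K}$ is a field of characteristic $0$. A graph $G=(V,E)$ has vertex set $V=\{1,\dots,n\}$ and is assumed finite, simple (no loops, no multiple edges) and connected. $\mathcal{N}(i)$ denotes the set of neighbors of vertex $i$, $\deg(i)=|\mathcal{N}(i)|$, and $(a_{ij})$ is the adjacency matrix ($a_{ij}=1$ if $i,j$ are adjacent, $0$ otherwise). The evolution algebra $\mathcal{A}(G)$ is the $\mathbb{K}$-algebra with basis $\{e_i: i\in V\}$ and product $e_i\cdot e_i=\sum_{k\in V}a_{ik}e_k=\sum_{k\in\mathcal{N}(i)}e_k$ and $e_i\cdot e_j=0$ for $i\neq j$. A derivation of $\mathcal{A}(G)$ is a linear map $d:\mathcal{A}(G)\to\mathcal{A}(G)$ with $d(u\cdot v)=d(u)\cdot v+u\cdot d(v)$ for all $u,v$; $\mathrm{Der}(\mathcal{A}(G))$ is the space of derivations, and for $d$ in it we write $d(e_i)=\sum_{k\in V}d_{ik}e_k$. Two vertices $i,j$ are twins, written $i\sim_t j$, if $\mathcal{N}(i)=\mathcal{N}(j)$. *)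

(* Defs.v *)
From HB Require Import structures.
From mathcomp Require Import all_boot all_order all_algebra.
Set Implicit Arguments. Unset Strict Implicit. Unset Printing Implicit Defensive.
Import GRing.Theory.
Local Open Scope ring_scope.

Definition simple_graph (n : nat) (e : rel 'I_n) : Prop :=
  (forall i j, e i j = e j i) /\ (forall i, ~~ e i i).

Definition connected_graph (n : nat) (e : rel 'I_n) : Prop :=
  forall i j, connect e i j.

Definition nbhd (n : nat) (e : rel 'I_n) (i : 'I_n) : {set 'I_n} := [set k | e i k].
Definition deg (n : nat) (e : rel 'I_n) (i : 'I_n) : nat := #|nbhd e i|.

Definition twins (n : nat) (e : rel 'I_n) (i j : 'I_n) : Prop := nbhd e i = nbhd e j.

(* Evolution algebra A(G): elements are coordinate row vectors u = sum_i u_i e_i;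
   e_i e_i = sum_{k in N(i)} e_k, e_i e_j = 0 (i <> j), extended bilinearly:
   (u . v)_k = sum_i u_i v_i a_{ik}. *)
Definition evmul (K : fieldType) (n : nat) (e : rel 'I_n) (u v : 'rV[K]_n) : 'rV[K]_n :=
  \row_k \sum_(i < n) u 0 i * v 0 i * (e i k)%:R.

(* A linear map d : A(G) -> A(G) is given by its matrix D with
   d(e_i) = sum_k D i k e_k, i.e. d(u) = u *m D (row-vector convention).
   D is a derivation iff d(u v) = d(u) v + u d(v) for all u, v. *)
Definition is_derivation (K : fieldType) (n : nat) (e : rel 'I_n) (D : 'M[K]_n) : Prop :=
  forall u v : 'rV[K]_n,
    evmul e u v *m D = evmul e (u *m D) v + evmul e u (v *m D).

(* Main.v *)
Require Import Defs.
From HB Require Import structures.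
From mathcomp Require Import all_boot all_order all_algebra.
From mathcomp Require Import ring.
Import GRing.Theory.
Local Open Scope ring_scope.
Set Implicit Arguments.

Section Aux.
Variables (K : fieldType) (n : nat) (e : rel 'I_n) (D : 'M[K]_n).
Hypothesis hD : is_derivation e D.

Lemma evmul_dl i (v : 'rV[K]_n) k :
  evmul e (delta_mx 0 i) v 0 k = v 0 i * (e i k)%:R.
Proof.
rewrite mxE (bigD1 i) //= big1 ?addr0; first by rewrite mxE !eqxx mul1r.
by move=> l /negbTE hl; rewrite mxE eqxx hl mul0r !mul0r.
Qed.

Lemma evmul_dr i (v : 'rV[K]_n) k :
  evmul e v (delta_mx 0 i) 0 k = v 0 i * (e i k)%:R.
Proof.
rewrite mxE (bigD1 i) //= big1 ?addr0; first by rewrite mxE !eqxx mulr1.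
by move=> l /negbTE hl; rewrite mxE eqxx hl mulr0 !mul0r.
Qed.

Lemma rowD i m : ((delta_mx 0 i : 'rV[K]_n) *m D) 0 m = D i m.
Proof.
rewrite mxE (bigD1 i) //= big1 ?addr0; first by rewrite mxE !eqxx mul1r.
by move=> l /negbTE hl; rewrite mxE eqxx hl mul0r.
Qed.

Lemma L1 i m : \sum_k (e i k)%:R * D k m = 2%:R * D i i * (e i m)%:R.
Proof.
have := congr1 (fun M : 'rV[K]_n => M 0 m) (hD (delta_mx 0 i) (delta_mx 0 i)).
rewrite mxE [X in _ = X]mxE evmul_dl evmul_dr !rowD => h.
rewrite mulr2n !mulrDl !mul1r -h; apply: eq_bigr => k _.
by rewrite evmul_dl mxE eqxx eqxx mul1r.
Qed.

Lemma L1' i m : \sum_k (e i k)%:R * D k m = 2%:R * D i i * (e i m)%:R.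
Proof. exact: L1. Qed.

Lemma L2 k m x : k != m -> D k m * (e m x)%:R + D m k * (e k x)%:R = 0.
Proof.
move=> hkm.
have := congr1 (fun M : 'rV[K]_n => M 0 x) (hD (delta_mx 0 k) (delta_mx 0 m)).
rewrite mxE [X in _ = X]mxE evmul_dl evmul_dr !rowD => h.
rewrite -h big1 // => l _; rewrite evmul_dl mxE eqxx.
by rewrite (negbTE hkm) !mul0r.
Qed.
End Aux.

Lemma has_nb n (e : rel 'I_n) (hn : (3 <= n)%N) (hconn : connected_graph e) i :
  exists k, e i k.
Proof.
have [j hj] : exists j : 'I_n, j != i.
  have h0 : (0 < n)%N by apply: leq_trans hn.
  have h1 : (1 < n)%N by apply: leq_trans hn.
  case: (eqVneq (Ordinal h0) i) => [<-|h]; last by exists (Ordinal h0).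
  by exists (Ordinal h1).
have /connectP [p hp hl] := hconn i j.
case: p hp hl => [|k p] /=; first by move=> _ hji; rewrite hji eqxx in hj.
by move=> /andP[hik _] _; exists k.
Qed.

Theorem corollary3p2 (K : fieldType) (hK : [pchar K] =i pred0)
  (n : nat) (hn : (3 <= n)%N) (e : rel 'I_n)
  (hsimple : simple_graph e) (hconn : connected_graph e)
  (D : 'M[K]_n) (hD : is_derivation e D) :
  (forall i : 'I_n,
      D i i = (2 * deg e i)%:R^-1 * \sum_(k in nbhd e i) D k k)
  /\ (forall i j : 'I_n, twins e i j -> D i i = D j j).
Proof.
have nz m : (m != 0)%N -> (m%:R : K) != 0.
  by move=> hm; rewrite (proj1 (pcharf0P K) hK).
have L3 k m : k != m -> D k m + D m k = 0.
  move=> hkm.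
  have [x hx] := has_nb hn hconn m.
  have h2 := L2 hD k m x hkm.
  rewrite hx mulr1 in h2.
  case hkx: (e k x); first by rewrite hkx mulr1 in h2.
  rewrite hkx mulr0 addr0 in h2; rewrite h2 add0r.
  have [y hy] := has_nb hn hconn k.
  have := L2 hD k m y hkm; by rewrite h2 mul0r add0r hy mulr1.
have P1 : forall i, D i i = (2 * deg e i)%:R^-1 * \sum_(k in nbhd e i) D k k.
  move=> i.
  set N := nbhd e i.
  have hS : \sum_(m in N) \sum_(k in N) D k m = (2 * deg e i)%:R * D i i.
    transitivity (\sum_(m in N) 2%:R * D i i).
      apply: eq_bigr => m hm.
      have := L1 hD i m; rewrite inE in hm; rewrite hm mulr1 => <-.
      rewrite [RHS](bigID (fun k => k \in N)) /= [X in _ + X]big1 ?addr0.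
        by apply: eq_bigr => k; rewrite inE => ->; rewrite mul1r.
      by move=> k; rewrite inE => /negbTE ->; rewrite mul0r.
    by rewrite sumr_const natrM -mulr_natr /deg -/N; ring.
  have hT : \sum_(m in N) \sum_(k in N) D k m = \sum_(k in N) D k k.
    apply: (mulfI (nz 2%N isT)).
    rewrite mulr_natl mulr2n.
    rewrite [X in X + _ = _]exchange_big /= -big_split /= mulr_sumr.
    apply: eq_bigr => m hm.
    rewrite -big_split /= (bigD1 m) //= big1 ?addr0; first by rewrite mulr2n mulrDl mul1r.
    by move=> k /andP[_ hk]; rewrite L3 // eq_sym.
  have hdeg : (2 * deg e i)%N != 0%N.
    rewrite muln_eq0 /= /deg -lt0n card_gt0; apply/set0Pn.
    have [x hx] := has_nb hn hconn i; by exists x; rewrite inE.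
  by rewrite -hT hS mulrA mulVf ?mul1r // nz.
split => // i j hij.
by rewrite !P1 /deg hij.
Qed.
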